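(* Let $l\ge1$ and fixed states $\sigma_1,\dots,\sigma_l\in D_k$ be given (independent of $n$). For each $n$, let $(M_i^{(n)})_{i=1}^l$ be a POVM on $\mathbb C^{N}$ ($N=N(n)$; $M_i^{(n)}\ge0$, $\sum_iM_i^{(n)}=I_N$) with $\|M_i^{(n)}\|=1$ for all $i$, and let $\Phi_n(\rho)=\sum_{i=1}^l\mathrm{Tr}[M_i^{(n)}\rho]\sigma_i$. Then the sequence of projections $P_n=V_nV_n^*$ associated to $\Phi_n$ (via Stinespring isometries $V_n$ with $\Phi_n(X)=(\mathrm{id}\otimes\mathrm{Tr})(V_nXV_n^* )$) satisfies condition $\mathcal C_m$, where $$m=\liminf_{n\to\infty}\min_{1\le i\le l}\dim_1M_i^{(n)}\ \ge 1.$$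
   Context: $\dim_1X$ denotes the dimension of the eigenspace of $X$ for the eigenvalue $1$. Condition $\mathcal C_m$: for every $A\in D_k$, the $m$ largest eigenvalues of $P_n(A\otimes I)P_n$ converge as $n\to\infty$ to a common limit $f(A)$. $D_k$ is the set of $k\times k$ density matrices. *)

(* Defs.v *)
From HB Require Import structures.
From mathcomp Require Import all_boot all_order all_algebra.
From mathcomp Require Import complex mxtens.
From mathcomp Require Import all_classical all_reals all_analysis.

Set Implicit Arguments.
Unset Strict Implicit.
Unset Printing Implicit Defensive.

Import Order.TTheory GRing.Theory Num.Theory numFieldNormedType.Exports.
Local Open Scope classical_set_scope.
Local Open Scope ring_scope.

Section QDefs.
Variable R : realType.
Local Notation C := R[i].

Definition adjmx m n (A : 'M[C]_(m, n)) : 'M[C]_(n, m) :=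
  (map_mx (@conjc R) A)^T.

Definition vnorm n (v : 'cV[C]_n) : R :=
  Num.sqrt (\sum_i (Normc.normc (v i 0)) ^+ 2).

Definition opnorm m n (A : 'M[C]_(m, n)) : R :=
  sup [set vnorm (A *m v) | v in [set v : 'cV[C]_n | vnorm v = 1]].

Definition psdmx n (A : 'M[C]_n) : Prop :=
  forall v : 'cV[C]_n, 0 <= (adjmx v *m A *m v) 0 0.

Definition density k (A : 'M[C]_k) : Prop := psdmx A /\ \tr A = 1.

Definition povm l N (M : 'I_l -> 'M[C]_N) : Prop :=
  (forall i, psdmx (M i)) /\ \sum_(i < l) M i = 1%:M.

Definition dim1 n (X : 'M[C]_n) : nat := \rank (eigenspace X 1).

Definition mpchannel l N k (M : 'I_l -> 'M[C]_N) (sigma : 'I_l -> 'M[C]_k)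
  (rho : 'M[C]_N) : 'M[C]_k :=
  \sum_(i < l) \tr (M i *m rho) *: sigma i.

(* partial trace over the second factor of C^k (x) C^d
   (index convention of mxtens: (i, j) |-> i * d + j, as for A *t B) *)
Definition ptrace2 k d (Y : 'M[C]_(k * d)) : 'M[C]_k :=
  \matrix_(i, i') \sum_(j < d) Y (mxtens_index (i, j)) (mxtens_index (i', j)).

Definition stinespring N k d (Phi : 'M[C]_N -> 'M[C]_k)
  (V : 'M[C]_(k * d, N)) : Prop :=
  adjmx V *m V = 1%:M /\
  forall X : 'M[C]_N, Phi X = ptrace2 (V *m X *m adjmx V).

Definition eigvals_desc n (A : 'M[C]_n) (s : seq R) : Prop :=
  sorted (fun x y : R => y <= x) s /\
  char_poly A = \prod_(x <- s) ('X - ((x%:C)%C)%:P).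

(* Condition C_m for a sequence of projections P_n on C^k (x) C^{d n}:
   for every A in D_k, the m largest eigenvalues of P_n (A (x) I) P_n
   converge, as n -> oo, to a common limit f(A). *)
Definition condC (k m : nat) (d : nat -> nat)
  (P : forall n, 'M[C]_(k * d n)) : Prop :=
  forall A : 'M[C]_k, density A ->
  exists fA : R,
    forall s : nat -> seq R,
      (forall n, eigvals_desc (P n *m (A *t (1%:M : 'M[C]_(d n))) *m P n) (s n)) ->
      forall j, (j < m)%N -> (fun n => nth 0 (s n) j) @ \oo --> fA.

Definition liminf_nat_eq (u : nat -> nat) (m : nat) : Prop :=
  (exists n0, forall n, (n0 <= n)%N -> (m <= u n)%N) /\
  (forall n0, exists n, (n0 <= n)%N /\ (u n <= m)%N).

End QDefs.

(* Main.v *)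
Require Import Defs.
From HB Require Import structures.
From mathcomp Require Import all_boot all_order all_algebra.
From mathcomp Require Import complex mxtens.
From mathcomp Require Import all_classical all_reals all_analysis.
From mathcomp Require Import ring lra.
Import Order.TTheory GRing.Theory Num.Theory.
Local Open Scope ring_scope.
Import Num.Def Num.Syntax.
Set Implicit Arguments. Unset Strict Implicit. Unset Printing Implicit Defensive.
Section Lib.
Variable R : realType.
Local Notation C := R[i].

Lemma conjcE (x : C) : conjc x = conjC x. Proof. by []. Qed.

Lemma adjmxE m n (A : 'M[C]_(m, n)) i j : adjmx A i j = conjC (A j i).
Proof. by rewrite !mxE. Qed.

Lemma adjmxK m n (A : 'M[C]_(m, n)) : adjmx (adjmx A) = A.
Proof. by apply/matrixP=> i j; rewrite !adjmxE conjCK. Qed.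

Lemma adjmxM m n p (A : 'M[C]_(m, n)) (B : 'M[C]_(n, p)) :
  adjmx (A *m B) = adjmx B *m adjmx A.
Proof.
apply/matrixP=> i j; rewrite adjmxE !mxE rmorph_sum /=.
by apply: eq_bigr=> t _; rewrite !adjmxE rmorphM /= mulrC.
Qed.

Lemma adjmxD m n (A B : 'M[C]_(m, n)) : adjmx (A + B) = adjmx A + adjmx B.
Proof. by apply/matrixP=> i j; rewrite !mxE rmorphD. Qed.

Lemma adjmxN m n (A : 'M[C]_(m, n)) : adjmx (- A) = - adjmx A.
Proof. by apply/matrixP=> i j; rewrite !mxE rmorphN. Qed.

Lemma adjmxB m n (A B : 'M[C]_(m, n)) : adjmx (A - B) = adjmx A - adjmx B.
Proof. by rewrite adjmxD adjmxN. Qed.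

Lemma adjmxZ m n (c : C) (A : 'M[C]_(m, n)) : adjmx (c *: A) = conjC c *: adjmx A.
Proof. by apply/matrixP=> i j; rewrite !mxE rmorphM. Qed.

Lemma adjmx0 m n : adjmx (0 : 'M[C]_(m, n)) = 0.
Proof. by apply/matrixP=> i j; rewrite !mxE rmorph0. Qed.

Lemma adjmx_sum m n I (r : seq I) (P : pred I) (F : I -> 'M[C]_(m, n)) :
  adjmx (\sum_(i <- r | P i) F i) = \sum_(i <- r | P i) adjmx (F i).
Proof. exact: (big_morph _ (@adjmxD m n) (@adjmx0 m n)). Qed.

Lemma adjmx1 n : adjmx (1%:M : 'M[C]_n) = 1%:M.
Proof.
by apply/matrixP=> i j; rewrite !mxE rmorph_nat eq_sym.
Qed.



Definition qf n (X : 'M[C]_n) (v : 'cV[C]_n) : C := (adjmx v *m X *m v) 0 0.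
Definition dotv n (u v : 'cV[C]_n) : C := (adjmx u *m v) 0 0.

Lemma dotvE n (u v : 'cV[C]_n) : dotv u v = \sum_(i < n) conjC (u i 0) * v i 0.
Proof. by rewrite /dotv mxE; apply: eq_bigr=> i _; rewrite adjmxE. Qed.

Lemma dotv_ge0 n (v : 'cV[C]_n) : 0 <= dotv v v.
Proof.
rewrite dotvE; apply: sumr_ge0=> i _; rewrite mulrC; exact: mul_conjC_ge0.
Qed.

Lemma dotv_eq0 n (v : 'cV[C]_n) : (dotv v v == 0) = (v == 0).
Proof.
apply/idP/idP; last by move/eqP->; rewrite /dotv mulmx0 mxE.
rewrite dotvE psumr_eq0 => [/allP H|i _]; last first.
  by rewrite mulrC mul_conjC_ge0.
apply/eqP/matrixP=> i j; rewrite ord1 mxE.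
have := H i (mem_index_enum _); rewrite /= mulrC mul_conjC_eq0.
by move/eqP.
Qed.

Lemma qf1 n (v : 'cV[C]_n) : qf 1%:M v = dotv v v.
Proof. by rewrite /qf mulmx1. Qed.

Lemma qfE n (X : 'M[C]_n) (v : 'cV[C]_n) : qf X v = dotv v (X *m v).
Proof. by rewrite /qf /dotv mulmxA. Qed.

Lemma qf_conj n p (X : 'M[C]_n) (B : 'M[C]_(n, p)) (v : 'cV[C]_p) :
  qf (adjmx B *m X *m B) v = qf X (B *m v).
Proof. by rewrite /qf adjmxM !mulmxA. Qed.

Lemma qfD n (X Y : 'M[C]_n) v : qf (X + Y) v = qf X v + qf Y v.
Proof. by rewrite /qf mulmxDr mulmxDl mxE. Qed.

Lemma qf_sum n I (r : seq I) (P : pred I) (F : I -> 'M[C]_n) v :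
  qf (\sum_(i <- r | P i) F i) v = \sum_(i <- r | P i) qf (F i) v.
Proof.
have q0 : qf 0 v = 0 by rewrite /qf mulmx0 mul0mx mxE.
exact: (big_morph (fun X => qf X v) (fun X Y => qfD X Y v) q0).
Qed.

Lemma qfZ n (c : C) (X : 'M[C]_n) v : qf (c *: X) v = c * qf X v.
Proof. by rewrite /qf -scalemxAr -scalemxAl mxE. Qed.

Lemma qfB n (X Y : 'M[C]_n) v : qf (X - Y) v = qf X v - qf Y v.
Proof. by rewrite -scaleN1r qfD qfZ mulN1r. Qed.

Lemma psd_sum n I (r : seq I) (P : pred I) (F : I -> 'M[C]_n) :
  (forall i, P i -> psdmx (F i)) -> psdmx (\sum_(i <- r | P i) F i).
Proof.
move=> H v; rewrite -/(qf _ v) qf_sum; apply: sumr_ge0 => i Pi; exact: H.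
Qed.

Lemma psd_conj n p (X : 'M[C]_n) (B : 'M[C]_(n, p)) :
  psdmx X -> psdmx (adjmx B *m X *m B).
Proof. by move=> H v; rewrite -/(qf _ v) qf_conj; apply: H. Qed.

Lemma psd_adjmx_mul n p (B : 'M[C]_(n, p)) : psdmx (adjmx B *m B).
Proof.
move=> v; rewrite !mulmxA -adjmxM -mulmxA.
exact: (dotv_ge0 (B *m v)).
Qed.

End Lib.
Section Lib2.
Variable R : realType.
Local Notation C := R[i].

Definition bf n (X : 'M[C]_n) (u w : 'cV[C]_n) : C := (adjmx u *m X *m w) 0 0.

Lemma bfDl n (X : 'M[C]_n) u1 u2 w : bf X (u1 + u2) w = bf X u1 w + bf X u2 w.
Proof. by rewrite /bf adjmxD !mulmxDl mxE. Qed.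
Lemma bfDr n (X : 'M[C]_n) u w1 w2 : bf X u (w1 + w2) = bf X u w1 + bf X u w2.
Proof. by rewrite /bf !mulmxDr mxE. Qed.
Lemma bfZl n (X : 'M[C]_n) (c : C) u w : bf X (c *: u) w = conjC c * bf X u w.
Proof. by rewrite /bf adjmxZ -!scalemxAl mxE. Qed.
Lemma bfZr n (X : 'M[C]_n) (c : C) u w : bf X u (c *: w) = c * bf X u w.
Proof. by rewrite /bf -!scalemxAr mxE. Qed.

Lemma qf_bf n (X : 'M[C]_n) v : qf X v = bf X v v. Proof. by []. Qed.

Lemma psd_real n (X : 'M[C]_n) v : psdmx X -> conjC (bf X v v) = bf X v v.
Proof. by move=> H; apply/conj_Creal/ger0_real/H. Qed.

Lemma psd_bf_conj n (X : 'M[C]_n) u w : psdmx X ->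
  bf X u w = conjC (bf X w u).
Proof.
move=> H.
have h1 := psd_real (u + w) H; have h2 := psd_real (u + 'i *: w) H.
move: h1 h2; rewrite !(bfDl, bfDr, bfZl, bfZr) !(rmorphD, rmorphM) /=.
rewrite !psd_real // !conjCK conjCi.
set a := bf X u u; set b := bf X w w; set p := bf X u w; set q := bf X w u.
move=> h1 h2.
have hi : 'i * 'i = -1 :> C := mulCii _.
have e : 2%:R * (p^* - q) = ((a + p^* + (q^* + b)) - (a + p + (q + b))) +
   'i * ((a + - 'i * p^* + ('i * q^* + 'i * (- 'i * b))) -
         (a + 'i * p + (- 'i * q + - 'i * ('i * b))))
   - ('i * 'i + 1) * (- p^* + q^* - p + q) by ring.
move: e; rewrite h1 h2 hi !subrr mulr0 addr0 addNr mul0r subr0.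
move/eqP; rewrite mulf_eq0 pnatr_eq0 /= subr_eq0 => /eqP <-.
by rewrite conjCK.
Qed.

End Lib2.
Section Lib3.
Variable R : realType.
Local Notation C := R[i].

Lemma adjmx_delta n (i : 'I_n) : adjmx (delta_mx i 0 : 'cV[C]_n) = delta_mx 0 i.
Proof. by apply/matrixP=> a b; rewrite !mxE rmorph_nat andbC. Qed.

Lemma bf_delta n (X : 'M[C]_n) i j : bf X (delta_mx i 0) (delta_mx j 0) = X i j.
Proof.
rewrite /bf adjmx_delta -rowE -colE !mxE.
by [].
Qed.

Lemma psd_herm n (X : 'M[C]_n) : psdmx X -> adjmx X = X.
Proof.
move=> H; apply/matrixP=> i j; rewrite adjmxE -!bf_delta.
by rewrite [in RHS](psd_bf_conj _ _ H).
Qed.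

Lemma conjC_R (r : R) : conjC (r%:C%C) = r%:C%C.
Proof. exact: conjc_real. Qed.

Lemma real_ge0P (x : C) : 0 <= x -> exists2 r : R, 0 <= r & x = r%:C%C.
Proof.
move=> hx; have /complex_realP [r er] := ger0_real hx.
by exists r => //; rewrite -ler0c -er.
Qed.

Lemma psd_zero n (X : 'M[C]_n) (u : 'cV[C]_n) : psdmx X -> qf X u = 0 ->
  X *m u = 0.
Proof.
move=> H qu; set w := X *m u.
have e1 : bf X w u = dotv w w by rewrite /bf /dotv -mulmxA.
have [d d0 ed] := real_ge0P (dotv_ge0 w).
have e2 : bf X u w = d%:C%C by rewrite (psd_bf_conj _ _ H) e1 ed conjC_R.
have [e e0 ee] := real_ge0P (H w).
have key : forall t : R, 0 <= - 2%:R * t * d + t ^+ 2 * e.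
  move=> t; have := H (u + (- t)%:C%C *: w).
  rewrite -/(qf _ _) qf_bf !(bfDl, bfDr, bfZl, bfZr) -!qf_bf qu e1 ed e2.
  rewrite /qf ee conjC_R -!rmorphM -!rmorphD add0r ler0c.
  congr (_ <= _); ring.
have := key (d / (e + 1)); set t := d / (e + 1) => ht.
have te : t * (e + 1) = d by rewrite /t mulrVK // unitfE gt_eqF // ltr_wpDl.
have t0 : 0 <= t by rewrite /t divr_ge0 // addr_ge0.
have d00 : d = 0 by nra.
by apply/eqP; rewrite -dotv_eq0 ed d00.
Qed.

End Lib3.
Section Spec.
Variable R : realType.
Local Notation C := R[i].
Local Open Scope sesquilinear_scope.

Lemma adjmx_tC m n (Q : 'M[C]_(m, n)) : adjmx Q = Q ^t*.
Proof. exact: map_trmx. Qed.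

Lemma spec_decomp n (H : 'M[C]_n) : adjmx H = H ->
  exists Q : 'M[C]_n, exists D : 'rV[C]_n,
    [/\ Q *m adjmx Q = 1%:M, adjmx Q *m Q = 1%:M, Q \in unitmx,
        invmx Q = adjmx Q & H = adjmx Q *m diag_mx D *m Q].
Proof.
move=> hH.
have hs : H \is hermsymmx.
  by apply/is_hermitianmxP; rewrite expr0 scale1r -adjmx_tC hH.
have /orthomx_spectralP eH := hermitian_normalmx hs.
set Q := spectralmx H in eH; set D := spectral_diag H in eH.
have uQ : Q \is unitarymx by apply: spectral_unitarymx.
have e1 : Q *m adjmx Q = 1%:M by rewrite adjmx_tC; apply/unitarymxP.
have iQ : invmx Q = adjmx Q by rewrite adjmx_tC invmx_unitary.
exists Q, D; split => //.
- by rewrite -iQ mulVmx // unitarymx_unit.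
- exact: unitarymx_unit.
- by rewrite -iQ.
Qed.

Lemma char_poly_similar n (Q B : 'M[C]_n) : Q \in unitmx ->
  char_poly (invmx Q *m B *m Q) = char_poly B.
Proof.
move=> uQ.
have e : char_poly_mx (invmx Q *m B *m Q) =
  map_mx polyC (invmx Q) *m char_poly_mx B *m map_mx polyC Q.
  rewrite /char_poly_mx mulmxBr mulmxBl -!map_mxM.
  rewrite mul_mx_scalar -scalemxAl -map_mxM mulVmx // map_mx1.
  by rewrite scalemx1.
rewrite /char_poly e !det_mulmx mulrC mulrA -det_mulmx -map_mxM mulmxV //.
by rewrite map_mx1 det1 mul1r.
Qed.

Lemma char_poly_diag n (D : 'rV[C]_n) :
  char_poly (diag_mx D) = \prod_(i < n) ('X - (D 0 i)%:P).
Proof.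
rewrite char_poly_trig ?diag_mx_is_trig //.
by apply: eq_bigr => i _; rewrite mxE eqxx mulr1n.
Qed.

End Spec.
Section Count.

Lemma prod_XsubC_perm (F : idomainType) (s t : seq F) :
  \prod_(x <- s) ('X - x%:P) = \prod_(x <- t) ('X - x%:P) -> perm_eq s t.
Proof.
elim: s t => [|x s IH] t.
  rewrite big_nil => /(congr1 (fun p : {poly F} => size p)).
  rewrite size_poly1 size_prod_XsubC; case: t => //.
move=> e.
have xt : x \in t.
  by rewrite -root_prod_XsubC -e root_prod_XsubC mem_head.
have pt := perm_to_rem xt.
move: e; rewrite (perm_big _ pt) !big_cons => /mulfI e.
have /IH : \prod_(x0 <- s) ('X - x0%:P) = \prod_(x0 <- rem x t) ('X - x0%:P).
  by apply: e; rewrite polyXsubC_eq0.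
by move=> ps; rewrite perm_sym (perm_trans pt) // perm_cons perm_sym.
Qed.

Lemma sorted_top (R : realDomainType) (s : seq R) (a : R) r :
  sorted (fun x y : R => y <= x) s -> (forall x, x \in s -> x <= a) ->
  (r <= count (pred1 a) s)%N -> forall j, (j < r)%N -> nth 0 s j = a.
Proof.
elim: s r => [|x s IH] r /=; first by rewrite leqn0 => _ _ /eqP -> .
move=> ps hs hc j hj.
have ps' : sorted (fun x y : R => y <= x) s := path_sorted ps.
have hs' : forall y, y \in s -> y <= a by move=> y ys; apply: hs; rewrite inE ys orbT.
case: (eqVneq x a) => [xa|xa].
  case: j hj => [|j] hj /=; first by [].
  apply: (IH r.-1) => //; last by rewrite -ltnS (ltn_predK hj).
  by move: hc; rewrite xa eqxx /= add1n -(ltn_predK hj) ltnS.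
have xlt : x < a by rewrite lt_neqAle xa hs ?mem_head.
have c0 : count (pred1 a) s = 0%N.
  apply/eqP; rewrite -leqn0 leqNgt -has_count; apply/hasP => -[y ys /= /eqP ya].
  have : y <= x.
    have := order_path_min (fun y x z (h1 : y <= x) (h2 : z <= y) => le_trans h2 h1) ps.
    by move=> /allP /(_ _ ys).
  by rewrite ya leNgt xlt.
by move: hc; rewrite (negbTE xa) c0 /= leqn0 => /eqP r0; rewrite r0 in hj.
Qed.

Lemma rank_sum_le (F : fieldType) m n I (r : seq I) (P : pred I)
  (G : I -> 'M[F]_(m, n)) :
  (\rank (\sum_(i <- r | P i) G i)%R <= \sum_(i <- r | P i) \rank (G i))%N.
Proof.
elim/big_ind2: _ => [|A a B b hA hB|i _]; first by rewrite mxrank0.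
  apply: leq_trans (mxrankS (addmx_sub_adds (submx_refl A) (submx_refl B))) _.
  apply: leq_trans (mxrank_adds_leqif A B).1 _.
  exact: leq_add.
by [].
Qed.

Lemma rank_diag_le (F : fieldType) n (d : 'rV[F]_n) :
  (\rank (diag_mx d) <= \sum_(i < n) (d 0%R i != 0%R))%N.
Proof.
rewrite diag_mx_sum_delta; apply: leq_trans (rank_sum_le _ _ _) _.
apply: leq_sum => i _; case: eqP => [->|_]; first by rewrite scale0r mxrank0.
by apply: leq_trans (mxrank_scale _ _) _; rewrite mxrank_delta.
Qed.

End Count.
Section Top.
Variable R : realType.
Local Notation C := R[i].

Lemma adjmx_eq0 m n (A : 'M[C]_(m, n)) : (adjmx A == 0) = (A == 0).
Proof.
apply/eqP/eqP => [h|->]; last exact: adjmx0.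
by rewrite -[A]adjmxK h adjmx0.
Qed.

Lemma dotv_gt0 n (v : 'cV[C]_n) : v != 0 -> 0 < dotv v v.
Proof. by move=> v0; rewrite lt_def dotv_eq0 v0 dotv_ge0. Qed.

Lemma top_eigs n (H : 'M[C]_n) (a : R) (s : seq R) r (W : 'M[C]_(n, r)) :
  adjmx H = H -> eigvals_desc H s ->
  (forall w, qf H w <= a%:C%C * dotv w w) ->
  H *m W = a%:C%C *: W ->
  forall j, (j < \rank W)%N -> nth 0 s j = a.
Proof.
move=> hH [ss hc] hq hW.
pose f := fun x : R => x%:C%C.
have hc' : char_poly H = \prod_(y <- map f s) ('X - y%:P) by rewrite big_map.
apply: sorted_top ss _ _ => //.
  move=> x xs.
  have : root (char_poly H) (f x) by rewrite hc' root_prod_XsubC map_f.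
  rewrite -eigenvalue_root_char => /eigenvalueP [v hv v0].
  set w := adjmx v.
  have Hw : H *m w = (f x) *: w.
    by rewrite /w -{1}hH -adjmxM hv adjmxZ conjC_R.
  have w0 : w != 0 by rewrite adjmx_eq0.
  have := hq w; rewrite qfE Hw /dotv -scalemxAr mxE -/(dotv w w).
  by rewrite ler_pM2r ?dotv_gt0 // lecR.
have [Q [D [e1 e2 uQ iQ eH]]] := spec_decomp hH.
have cp : \prod_(y <- map f s) ('X - y%:P) =
          \prod_(y <- map (fun i => D 0 i) (index_enum 'I_n)) ('X - y%:P).
  by rewrite -hc' big_map eH -iQ char_poly_similar // char_poly_diag.
have pe := prod_XsubC_perm cp.
have cnt : count (pred1 a) s = (\sum_(i < n) (D 0%R i == a%:C%C))%N.
  have -> : count (pred1 a) s = count (pred1 (f a)) (map f s).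
    by rewrite count_map; apply: eq_count => x /=; rewrite /f (inj_eq (@complexI _)).
  rewrite (permP pe) count_map -sum1_count big_mkcond /=.
  by apply: eq_bigr => i _; case: (_ == _).
rewrite cnt.
set Y := Q *m W.
have QH : Q *m H = diag_mx D *m Q by rewrite eH !mulmxA e1 mul1mx.
have hY : diag_mx D *m Y = a%:C%C *: Y.
  by rewrite /Y mulmxA -QH -mulmxA hW scalemxAr.
set S := diag_mx (\row_i ((D 0 i == a%:C%C)%:R : C)).
have SY : S *m Y = Y.
  apply/matrixP => i j; rewrite mul_diag_mx !mxE.
  case: eqP => [_|hne]; first by rewrite mul1r.
  have := congr1 (fun M : 'M[C]_(n, r) => M i j) hY; rewrite mul_diag_mx !mxE.
  move/eqP; rewrite -subr_eq0 -mulrBl mulf_eq0 subr_eq0 => /orP [/eqP //|/eqP ->].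
  by rewrite mul0r.
have WY : W = adjmx Q *m Y by rewrite /Y mulmxA e2 mul1mx.
apply: leq_trans (_ : \rank Y <= _)%N.
  by rewrite {1}WY mxrankM_maxr.
rewrite -SY; apply: leq_trans (mxrankM_maxl _ _) _.
apply: leq_trans (rank_diag_le _) _.
apply: leq_sum => i _; rewrite mxE.
by case: (D 0 i == _) => /=; rewrite ?oner_eq0 ?eqxx.
Qed.

End Top.
Section Norm.
Variable R : realType.
Local Notation C := R[i].

Lemma normc_norm (z : C) : (Normc.normc z)%:C%C = `|z|.
Proof. by case: z => a b; rewrite normc_def. Qed.

Lemma vnorm_dot n (x : 'cV[C]_n) : ((vnorm x) ^+ 2)%:C%C = dotv x x.
Proof.
rewrite /vnorm sqr_sqrtr; last by apply: sumr_ge0 => i _; rewrite sqr_ge0.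
rewrite dotvE rmorph_sum; apply: eq_bigr => i _.
by rewrite rmorphXn /= normc_norm normCK mulrC.
Qed.

Lemma vnorm_ge0 n (x : 'cV[C]_n) : 0 <= vnorm x.
Proof. exact: sqrtr_ge0. Qed.

Lemma qf_diag n (d : 'rV[C]_n) (y : 'cV[C]_n) :
  qf (diag_mx d) y = \sum_(j < n) d 0 j * (conjC (y j 0) * y j 0).
Proof.
rewrite qfE dotvE; apply: eq_bigr => j _.
rewrite mul_diag_mx mxE; ring.
Qed.

Lemma re_ge0 (x : C) : 0 <= x -> x = (complex.Re x)%:C%C.
Proof. by move=> /real_ge0P [r _ ->]. Qed.

Lemma dim1_pos N (M : 'M[C]_N) : psdmx M -> psdmx (1%:M - M) -> opnorm M = 1 ->
  (1 <= dim1 M)%N.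
Proof.
move=> pM pIM hn.
have [Q [D [e1 e2 uQ iQ eM]]] := spec_decomp (psd_herm pM).
rewrite lt0n; apply/negP => /eqP d0.
have E0 : eigenspace M 1 = 0 by apply/eqP; rewrite -mxrank_eq0; apply/eqP.
pose w (i : 'I_N) : 'cV[C]_N := adjmx Q *m delta_mx i 0.
have Qw : forall i, Q *m w i = delta_mx i 0 by move=> i; rewrite mulmxA e1 mul1mx.
have qMw : forall i, qf M (w i) = D 0 i.
  move=> i; rewrite eM qf_conj Qw qf_bf bf_delta mxE eqxx mulr1n.
  by [].
have dw : forall i, dotv (w i) (w i) = 1.
  have e : (1%:M : 'M[C]_N) = adjmx Q *m 1%:M *m Q by rewrite mulmx1 e2.
  move=> i; rewrite -qf1 e.
  by rewrite qf_conj Qw qf_bf bf_delta mxE eqxx.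
pose d (i : 'I_N) := complex.Re (D 0 i).
have Dd : forall i, D 0 i = (d i)%:C%C by move=> i; rewrite /d -re_ge0 // -qMw pM.
have d0i : forall i, 0 <= d i by move=> i; rewrite -ler0c -Dd -qMw; apply: pM.
have d1 : forall i, d i <= 1.
  move=> i; have := pIM (w i); rewrite -/(qf _ _) qfB qf1 dw qMw Dd.
  by rewrite subr_ge0 -(rmorph1 (real_complex R)) lecR.
have dn1 : forall i, d i != 1.
  move=> i; apply/eqP => di1.
  have hr : row i Q *m M = 1 *: row i Q.
    rewrite -row_mul eM !mulmxA e1 mul1mx row_mul.
    apply/rowP => j; rewrite !mxE (bigD1 i) //= big1 ?addr0.
      by rewrite !mxE eqxx mulr1n Dd di1 (rmorph1 (real_complex R)).
    by move=> k /negbTE ki; rewrite !mxE eq_sym ki mulr0n mul0r.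
  have /eigenspaceP := hr; rewrite E0 submx0 => /eqP ri0.
  have := congr1 (row i) e1; rewrite row_mul ri0 mul0mx.
  move/(congr1 (fun r : 'rV[C]_N => r 0 i)); rewrite !mxE eqxx => /eqP.
  by rewrite eq_sym oner_eq0.
pose lam := \big[Num.max/0]_(i < N) d i.
have lam0 : 0 <= lam.
  rewrite /lam; apply: (big_ind (fun x : R => 0 <= x)) => // x y hx hy.
  by rewrite le_max hx.
have lam1 : lam < 1.
  rewrite /lam; apply: (big_ind (fun x : R => x < 1)) => //; first by move=> x y hx hy; rewrite gt_max hx hy.
  by move=> i _; rewrite lt_neqAle dn1 d1.
have dlam : forall i, d i <= lam.
  by move=> i; rewrite /lam (bigD1 i) //= le_max lexx.
have dotvM : forall p (B : 'M[C]_(p, N)) (v : 'cV[C]_N),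
    dotv (B *m v) (B *m v) = qf (adjmx B *m B) v.
  by move=> p B v; rewrite -qf1 -qf_conj mulmx1.
have QQ : adjmx Q *m Q = adjmx Q *m 1%:M *m Q by rewrite mulmx1.
pose D2 := \row_j (D 0 j * D 0 j).
have MM : adjmx M *m M = adjmx Q *m diag_mx D2 *m Q.
  rewrite (psd_herm pM) eM !mulmxA -(mulmxA (adjmx Q *m diag_mx D) Q) e1 mulmx1.
  rewrite -(mulmxA (adjmx Q)); congr (_ *m _ *m _).
  apply/matrixP => a b; rewrite mul_diag_mx !mxE.
  by case: (a == b); rewrite ?mulr1n ?mulr0n ?mulr0.
have bound : forall v : 'cV[C]_N, vnorm v = 1 -> vnorm (M *m v) <= lam.
  move=> v hv.
  have h2 : ((vnorm (M *m v)) ^+ 2)%:C%C <= (lam ^+ 2)%:C%C.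
    rewrite vnorm_dot dotvM MM qf_conj qf_diag.
    have -> : (lam ^+ 2)%:C%C = (lam ^+ 2)%:C%C * dotv (Q *m v) (Q *m v).
      by rewrite dotvM e2 qf1 -vnorm_dot hv expr1n (rmorph1 (real_complex R)) mulr1.
    rewrite dotvE mulr_sumr; apply: ler_sum => j _.
    apply: ler_wpM2r; first by rewrite mulrC mul_conjC_ge0.
    rewrite mxE Dd -rmorphM lecR -expr2.
    by rewrite expr2; apply: ler_pM => //; apply: d0i.
  move: h2; rewrite lecR => h2.
  have := vnorm_ge0 (M *m v); nra.
move: hn; rewrite /opnorm.
set E := (X in sup X = _).
have ub : ubound E lam by move=> y [v hv <-]; apply: bound.
have [->|/set0P En] := eqVneq E set0.
  by rewrite sup0 => /eqP; rewrite eq_sym oner_eq0.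
move=> hs; have := ge_sup En ub; rewrite hs => h1.
by move: lam1; rewrite ltNge h1.
Qed.

End Norm.
Section Tens.
Variable R : realType.
Local Notation C := R[i].

Lemma sum_tens k d (F : 'I_(k * d) -> C) :
  \sum_(t < k * d) F t = \sum_(i < k) \sum_(j < d) F (mxtens_index (i, j)).
Proof.
rewrite pair_big /=.
rewrite (reindex (@mxtens_index k d)) /=; last first.
  by exists (@mxtens_unindex k d) => x _; rewrite (mxtens_indexK, mxtens_unindexK).
by apply: eq_bigr => -[i j].
Qed.

Lemma sum_delta1 d (j : 'I_d) (F : 'I_d -> C) :
  \sum_(j' < d) (1%:M : 'M[C]_d) j j' * F j' = F j.
Proof.
rewrite (bigD1 j) //= big1 ?addr0; first by rewrite mxE eqxx mul1r.
by move=> j' /negbTE h; rewrite mxE eq_sym h mul0r.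
Qed.

Lemma qf_entries n (X : 'M[C]_n) (v : 'cV[C]_n) :
  qf X v = \sum_a \sum_b conjC (v a 0) * X a b * v b 0.
Proof.
rewrite /qf mxE exchange_big; apply: eq_bigr => b _.
rewrite mxE mulr_suml; apply: eq_bigr => a _.
by rewrite adjmxE.
Qed.

Lemma psd_tens k d (A : 'M[C]_k) : psdmx A -> psdmx (A *t (1%:M : 'M[C]_d)).
Proof.
move=> pA v; rewrite -/(qf _ v) qf_entries sum_tens.
pose w (j : 'I_d) : 'cV[C]_k := \col_i v (mxtens_index (i, j)) 0.
have -> : \sum_(i < k) \sum_(j < d) \sum_b
    conjC (v (mxtens_index (i, j)) 0) * (A *t 1%:M) (mxtens_index (i, j)) b * v b 0
  = \sum_(j < d) qf A (w j).
  rewrite exchange_big; apply: eq_bigr => j _; rewrite qf_entries.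
  apply: eq_bigr => i _; rewrite sum_tens; apply: eq_bigr => i' _.
  under eq_bigr => j' _ do rewrite tensmxE.
  rewrite !mxE.
  rewrite (eq_bigr (fun j' => (1%:M : 'M[C]_d) j j' * (conjC (v (mxtens_index (i, j)) 0)
     * A i i' * v (mxtens_index (i', j')) 0))); last by move=> j' _; ring.
  by rewrite sum_delta1.
by apply: sumr_ge0 => j _; apply: pA.
Qed.

Lemma tr_ptrace2 k d (A : 'M[C]_k) (Y : 'M[C]_(k * d)) :
  \tr (A *m ptrace2 Y) = \tr ((A *t (1%:M : 'M[C]_d)) *m Y).
Proof.
rewrite /mxtrace sum_tens.
under [RHS]eq_bigr => i _ do under eq_bigr => j _ do rewrite mxE sum_tens.
apply: eq_bigr => i _; rewrite mxE.
rewrite exchange_big; apply: eq_bigr => i' _.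
rewrite mxE mulr_sumr; apply: eq_bigr => j _.
under eq_bigr => j' _ do rewrite tensmxE.
under eq_bigr => j' _ do rewrite -mulrA [1%:M j j' * _]mulrC mulrA [_ * 1%:M j j']mulrC.
by rewrite sum_delta1.
Qed.

End Tens.
Section Kid.
Variable R : realType.
Local Notation C := R[i].

Lemma tr_delta n (X : 'M[C]_n) a b : \tr (X *m delta_mx b a) = X a b.
Proof.
rewrite /mxtrace (bigD1 a) //= big1 ?addr0.
  rewrite mxE (bigD1 b) //= big1 ?addr0 => [|u /negbTE h].
    by rewrite !mxE !eqxx mulr1.
  by rewrite !mxE h /= mulr0.
move=> t /negbTE h; rewrite mxE big1 // => u _.
by rewrite !mxE h andbF mulr0.
Qed.

Lemma mxtrace_sumC n I (r : seq I) (P : pred I) (F : I -> 'M[C]_n) :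
  \tr (\sum_(i <- r | P i) F i) = \sum_(i <- r | P i) \tr (F i).
Proof. exact: (big_morph _ (@mxtraceD _ _) (@mxtrace0 _ _)). Qed.

Lemma K_eq l N k d (M : 'I_l -> 'M[C]_N) (sigma : 'I_l -> 'M[C]_k)
  (V : 'M[C]_(k * d, N)) (A : 'M[C]_k) :
  stinespring (mpchannel M sigma) V ->
  adjmx V *m (A *t (1%:M : 'M[C]_d)) *m V = \sum_(i < l) \tr (A *m sigma i) *: M i.
Proof.
move=> [_ hV]; apply/matrixP => a b; rewrite -!tr_delta.
set X := delta_mx b a.
rewrite -!mulmxA mxtrace_mulC -mulmxA.
rewrite -tr_ptrace2 -hV /mpchannel mulmx_sumr mxtrace_sumC mulmx_suml mxtrace_sumC.
apply: eq_bigr => i _.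
by rewrite -scalemxAr -scalemxAl !mxtraceZ mulrC.
Qed.

End Kid.
Section Fixed.
Variable R : realType.
Local Notation C := R[i].
Variables (l N k d : nat) (M : 'I_l -> 'M[C]_N) (sigma : 'I_l -> 'M[C]_k)
  (V : 'M[C]_(k * d, N)) (A : 'M[C]_k).
Hypotheses (hM : povm M) (hV : stinespring (mpchannel M sigma) V) (pA : psdmx A).

Let T := A *t (1%:M : 'M[C]_d).
Let P := V *m adjmx V.
Let H := P *m T *m P.
Let c i := \tr (A *m sigma i).
Let K := adjmx V *m T *m V.

Lemma VV : adjmx V *m V = 1%:M. Proof. by case: hV. Qed.

Lemma Keq : K = \sum_(i < l) c i *: M i. Proof. exact: K_eq. Qed.

Lemma Hdef : H = V *m K *m adjmx V.
Proof. by rewrite /H /K /P !mulmxA. Qed.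

Lemma psdM i : psdmx (M i). Proof. by case: hM. Qed.

Lemma povm_kill i (u : 'cV[C]_N) : M i *m u = u -> forall j, j != i -> M j *m u = 0.
Proof.
move=> hu j ji; apply: psd_zero; first exact: psdM.
have e : qf (\sum_(t < l) M t) u = dotv u u by case: hM => _ ->; rewrite qf1.
move: e; rewrite qf_sum (bigD1 i) //= qfE hu.
rewrite -{2}[dotv u u]addr0 => /addrI /psumr_eq0P h.
by apply: h => // t _; apply: psdM.
Qed.

Lemma povm_kill_mx i p (G : 'M[C]_(N, p)) : M i *m G = G ->
  forall j, j != i -> M j *m G = 0.
Proof.
move=> hG j ji; apply/matrixP => a b.
have hu : M i *m col b G = col b G by rewrite !colE mulmxA hG.
have h := povm_kill hu ji.
have : (M j *m col b G) a 0 = 0 by rewrite h mxE.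
by rewrite colE mulmxA -colE mxE => ->; rewrite mxE.
Qed.

Lemma K_eig i p (G : 'M[C]_(N, p)) : M i *m G = G -> K *m G = c i *: G.
Proof.
move=> hG; rewrite Keq mulmx_suml (bigD1 i) //= big1 ?addr0.
  by rewrite -scalemxAl hG.
by move=> j ji; rewrite -scalemxAl (povm_kill_mx hG ji) scaler0.
Qed.

Lemma H_eig i p (G : 'M[C]_(N, p)) : M i *m G = G -> H *m (V *m G) = c i *: (V *m G).
Proof.
move=> hG; have e := K_eig hG.
rewrite Hdef -mulmxA (mulmxA (adjmx V) V G) VV mul1mx -mulmxA e.
by rewrite scalemxAr.
Qed.

Lemma T_psd : psdmx T. Proof. exact: psd_tens. Qed.

Lemma P_herm : adjmx P = P. Proof. by rewrite /P adjmxM adjmxK. Qed.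

Lemma H_herm : adjmx H = H.
Proof.
have e : forall X Y : 'M[C]_(k * d), adjmx X = X -> adjmx Y = Y ->
    adjmx (X *m Y *m X) = X *m Y *m X.
  by move=> X Y hX hY; rewrite !adjmxM hX hY mulmxA.
exact: e P_herm (psd_herm T_psd).
Qed.

Lemma H_psd : psdmx H.
Proof. by rewrite /H -{1}P_herm; apply: psd_conj; apply: T_psd. Qed.

Lemma c_ge0 i (u : 'cV[C]_N) : u != 0 -> M i *m u = u -> 0 <= c i.
Proof.
move=> u0 hu.
have hVu : H *m (V *m u) = c i *: (V *m u) by apply: H_eig.
have := H_psd (V *m u); rewrite -/(qf _ _) qfE hVu /dotv -scalemxAr mxE.
have -> : (adjmx (V *m u) *m (V *m u)) 0 0 = dotv u u.
  by rewrite adjmxM mulmxA -(mulmxA (adjmx u)) VV mulmx1.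
by rewrite pmulr_lge0 // dotv_gt0.
Qed.

Lemma P_proj : P *m P = P.
Proof. by rewrite /P mulmxA -(mulmxA V) VV mulmx1. Qed.

Lemma qfP_le (w : 'cV[C]_(k * d)) : qf P w <= dotv w w.
Proof.
rewrite -subr_ge0 -qf1 -qfB.
have -> : 1%:M - P = adjmx (1%:M - P) *m (1%:M - P).
  rewrite adjmxB adjmx1 P_herm mulmxBl mul1mx mulmxBr mulmx1 P_proj.
  by rewrite subrr subr0.
exact: psd_adjmx_mul.
Qed.

Lemma H_bound (a : C) : 0 <= a -> (forall j, c j <= a) ->
  forall w, qf H w <= a * dotv w w.
Proof.
move=> a0 ha w.
have -> : H = adjmx (adjmx V) *m K *m adjmx V by rewrite adjmxK Hdef.
rewrite qf_conj Keq qf_sum.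
set x := adjmx V *m w.
apply: le_trans (_ : \sum_(i < l) a * qf (M i) x <= _).
  apply: ler_sum => i _; rewrite qfZ; apply: ler_wpM2r => //.
  exact: psdM.
rewrite -mulr_sumr -qf_sum; case: hM => _ ->; rewrite qf1.
apply: ler_wpM2l => //.
have -> : dotv x x = qf P w by rewrite /x -qf1 -qf_conj mulmx1 adjmxK.
exact: qfP_le.
Qed.

Lemma eig_mx i : exists G : 'M[C]_(N, dim1 (M i)),
  M i *m G = G /\ \rank G = dim1 (M i).
Proof.
set E := row_base (eigenspace (M i) 1).
exists (adjmx E); split.
  have : (E <= eigenspace (M i) 1)%MS by rewrite eq_row_base.
  move/eigenspaceP; rewrite scale1r => hE.
  have := congr1 (fun X => adjmx X) hE; rewrite adjmxM (psd_herm (psdM i)).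
  exact.
rewrite /adjmx mxrank_tr mxrank_map.
by apply/eqP; exact: row_base_free.
Qed.

Lemma vec_of i : (1 <= dim1 (M i))%N -> exists u : 'cV[C]_N, u != 0 /\ M i *m u = u.
Proof.
move=> h; have [G [hG rG]] := eig_mx i.
have : G != 0 by rewrite -mxrank_eq0 rG -lt0n.
case: (pickP (fun b => col b G != 0)) => [b hb _|h0].
  by exists (col b G); split => //; rewrite !colE mulmxA hG.
move/negP; case; apply/eqP/matrixP => a b.
by have /negbFE/eqP/(congr1 (fun X : 'cV[C]_N => X a 0)) := h0 b; rewrite !mxE.
Qed.

Lemma rank_VG p (G : 'M[C]_(N, p)) : (\rank G <= \rank (V *m G))%N.
Proof.
have {1}-> : G = adjmx V *m (V *m G) by rewrite mulmxA VV mul1mx.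
exact: mxrankM_maxr.
Qed.

End Fixed.
Lemma argmax_ex (R : realDomainType) l (hl : (0 < l)%N) (f : 'I_l -> R) :
  exists i, forall j, f j <= f i.
Proof.
case: (@Order.TotalTheory.arg_maxP _ _ _ (Ordinal hl) xpredT f isT) => i _ h.
by exists i => j; apply: h.
Qed.

Lemma bigmin_le (I : finType) (x : nat) (F : I -> nat) i :
  (\big[minn/x]_(j : I) F j <= F i)%N.
Proof.
have : i \in index_enum I by rewrite mem_index_enum.
elim: (index_enum I) => [//|a r IH]; rewrite inE big_cons => /orP [/eqP ->|ir].
  exact: geq_minl.
by apply: leq_trans (geq_minr _ _) (IH ir).
Qed.

Theorem proposition6p2 (R : realType) (k l : nat) (hl : (1 <= l)%N)
  (sigma : 'I_l -> 'M[R[i]]_k) (hsigma : forall i, density (sigma i))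
  (N : nat -> nat) (M : forall n, 'I_l -> 'M[R[i]]_(N n))
  (hM : forall n, povm (M n))
  (hnorm : forall n i, opnorm (M n i) = 1)
  (d : nat -> nat) (V : forall n, 'M[R[i]]_(k * d n, N n))
  (hV : forall n, stinespring (mpchannel (M n) sigma) (V n))
  (m : nat)
  (hm : liminf_nat_eq (fun n => \big[minn/N n]_(i < l) dim1 (M n i)) m) :
  (1 <= m)%N /\ condC m (fun n => V n *m adjmx (V n)).
Proof.
have psdIM : forall n i, psdmx (1%:M - M n i).
  move=> n i v; case: (hM n) => hp hs.
  rewrite -/(qf _ v) qfB -hs qf_sum (bigD1 i) //= addrAC subrr add0r.
  by apply: sumr_ge0 => j _; apply: hp.
have dpos : forall n i, (1 <= dim1 (M n i))%N.
  by move=> n i; apply: dim1_pos; [apply: psdM (hM n) i | apply: psdIM | apply: hnorm].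
have minge : forall n, (1 <= \big[minn/N n]_(i < l) dim1 (M n i))%N.
  move=> n; apply: (big_ind (fun x => 1 <= x)%N).
  - apply: leq_trans (dpos n (Ordinal hl)) _; exact: rank_leq_col.
  - by move=> x y hx hy; rewrite leq_min hx hy.
  - by move=> i _; apply: dpos.
have m1 : (1 <= m)%N.
  have [n [_ hn]] := hm.2 0%N; exact: leq_trans (minge n) hn.
split => //.
move=> A [pA _].
have [n0 hn0] := hm.1.
have minle : forall n i, (\big[minn/N n]_(j < l) dim1 (M n j) <= dim1 (M n i))%N.
  by move=> n i; apply: bigmin_le.
pose c i := \tr (A *m sigma i).
have cge0 : forall i, 0 <= c i.
  move=> i; have [u [u0 hu]] := vec_of (hM n0) (dpos n0 i).
  exact: (c_ge0 (hM n0) (hV n0) pA u0 hu).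
pose f i := complex.Re (c i).
have ce : forall i, c i = (f i)%:C%C by move=> i; apply: re_ge0.
have [ist his] := argmax_ex hl f.
exists (f ist) => s hs j hj.
apply: cvg_near_cst.
exists n0 => // n /= hn.
have [G [hG rG]] := eig_mx (hM n) ist.
have hE := H_eig A (hM n) (hV n) hG.
rewrite /= -/(c ist) ce in hE.
apply: (top_eigs (H_herm (V n) pA) (hs n) _ hE).
  apply: (H_bound (hM n) (hV n)); first by rewrite ler0c; apply: le_trans (his ist); rewrite -ler0c -ce.
  by move=> t /=; rewrite -/(c t) ce lecR.
apply: leq_trans (rank_VG (hV n) G); rewrite rG.
apply: leq_trans hj _; apply: leq_trans (hn0 n hn) _; exact: minle.
Qed.
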